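(* Let $(X,T)$ be a dynamical system (a compact metrizable space $X$ with a homeomorphism $T$) which satisfies partial specification with periods $\mathcal{P}$ for some $\mathcal{P}\subseteq\mathbb{N}$ with bounded gaps. Then $(X,T)$ satisfies partial shadowing.
   Context: Fix a compatible metric $d_X$ (both properties are independent of this choice). Partial specification with periods $\mathcal{P}$: for every $\varepsilon>0$ there exist $N,M\in\mathbb{N}$ such that for every $M$-spaced specification $\{(x_i;a_i,b_i)\}_{i=1}^r$ (i.e. $x_i\in X$, integers $0\le a_1<b_1<\cdots<a_r<b_r$ with $a_{i+1}-b_i\ge M$) and every $n\in\mathcal{P}$ with $n\ge\max\{N,(1+\varepsilon)b_r\}$ there is $y\in X$ with $T^ny=y$ such that $|\{a_i\le m<b_i:d_X(T^mx_i,T^my)<\varepsilon\}|>(1-\varepsilon)(b_i-a_i)$ for every $i$. A finite sequence $(x_n)_{n=1}^N$ is $\varepsilon$-partially traced by $y$ if $|\{1\le n\le N: d_X(x_n,T^ny)<\varepsilon\}|>(1-\varepsilon)N$. It is a $\delta$-partial pseudo-orbit if $N=1$, or $N\ge2$ and $|\{1\le n\le N-1: d_X(Tx_n,x_{n+1})<\delta\}|>(1-\delta)(N-1)$. $(X,T)$ satisfies partial shadowing if for every $\varepsilon>0$ there exists $\delta>0$ such that every $\delta$-partial pseudo-orbit is $\varepsilon$-partially traced by some point of $X$. *)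

(* Defs.v *)
From Stdlib Require Import Reals List Arith ClassicalEpsilon.
Open Scope R_scope.

Record is_metric {X : Type} (d : X -> X -> R) : Prop := {
  metric_nonneg : forall x y, 0 <= d x y;
  metric_eq0 : forall x y, d x y = 0 <-> x = y;
  metric_sym : forall x y, d x y = d y x;
  metric_triangle : forall x y z, d x z <= d x y + d y z
}.

Definition metric_open {X : Type} (d : X -> X -> R) (U : X -> Prop) : Prop :=
  forall x, U x -> exists e, 0 < e /\ forall y, d x y < e -> U y.

Definition metric_compact {X : Type} (d : X -> X -> R) : Prop :=
  forall (I : Type) (U : I -> X -> Prop),
    (forall i, metric_open d (U i)) ->
    (forall x, exists i, U i x) ->
    exists l : list I, forall x, exists i, In i l /\ U i x.

Definition metric_continuous {X : Type} (d : X -> X -> R) (f : X -> X) : Prop :=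
  forall x e, 0 < e -> exists del, 0 < del /\
    forall y, d x y < del -> d (f x) (f y) < e.

Definition metric_homeomorphism {X : Type} (d : X -> X -> R) (T : X -> X) : Prop :=
  metric_continuous d T /\
  exists Tinv : X -> X, (forall x, Tinv (T x) = x) /\ (forall x, T (Tinv x) = x)
                        /\ metric_continuous d Tinv.

Definition dynamical_system {X : Type} (d : X -> X -> R) (T : X -> X) : Prop :=
  is_metric d /\ metric_compact d /\ metric_homeomorphism d T.

Definition iterT {X : Type} (T : X -> X) (n : nat) (x : X) : X := Nat.iter n T x.

Definition count_range (a b : nat) (P : nat -> Prop) : nat :=
  length (filter (fun m => if excluded_middle_informative (P m) then true else false)
                 (seq a (b - a))).

Definition bounded_gaps (P : nat -> Prop) : Prop :=
  exists K : nat, forall n : nat, exists p, P p /\ (n <= p < n + K)%nat.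

(** Partial specification with periods P. A specification
    {(x_i; a_i, b_i)}_{i=1}^r is encoded by r >= 1 and functions x, a, b
    indexed by i = 0, ..., r-1. *)
Definition partial_specification {X : Type} (d : X -> X -> R) (T : X -> X)
    (P : nat -> Prop) : Prop :=
  forall eps, 0 < eps -> exists N M : nat,
    forall (r : nat) (x : nat -> X) (a b : nat -> nat),
      (1 <= r)%nat ->
      (forall i, (i < r)%nat -> (a i < b i)%nat) ->
      (forall i, (i + 1 < r)%nat -> (b i + M <= a (i + 1))%nat) ->
      forall n : nat, P n -> (N <= n)%nat -> (1 + eps) * INR (b (r - 1)%nat) <= INR n ->
      exists y, iterT T n y = y /\
        forall i, (i < r)%nat ->
          INR (count_range (a i) (b i)
                 (fun m => d (iterT T m (x i)) (iterT T m y) < eps))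
          > (1 - eps) * INR (b i - a i).

Definition partial_pseudo_orbit {X : Type} (d : X -> X -> R) (T : X -> X)
    (delta : R) (N : nat) (x : nat -> X) : Prop :=
  N = 1%nat \/
  ((2 <= N)%nat /\
   INR (count_range 1 N (fun n => d (T (x n)) (x (n + 1)%nat) < delta))
   > (1 - delta) * INR (N - 1)).

Definition partially_traced {X : Type} (d : X -> X -> R) (T : X -> X)
    (eps : R) (N : nat) (x : nat -> X) (y : X) : Prop :=
  INR (count_range 1 (N + 1) (fun n => d (x n) (iterT T n y) < eps))
  > (1 - eps) * INR N.

Definition partial_shadowing {X : Type} (d : X -> X -> R) (T : X -> X) : Prop :=
  forall eps, 0 < eps -> exists delta, 0 < delta /\
    forall (N : nat) (x : nat -> X), (1 <= N)%nat ->
      partial_pseudo_orbit d T delta N x ->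
      exists y, partially_traced d T eps N x y.

(* Main.v *)
Require Import Defs.
From Stdlib Require Import Reals List Arith Lia Lra ClassicalEpsilon.
Open Scope R_scope.

Lemma cr_eq a n (P : nat -> Prop) : count_range a (a+n) P =
  length (filter (fun m => if excluded_middle_informative (P m) then true else false) (seq a n)).
Proof. unfold count_range. replace (a+n-a)%nat with n by lia. reflexivity. Qed.

Lemma cr_split a n k P : count_range a (a+n+k) P = (count_range a (a+n) P + count_range (a+n) (a+n+k) P)%nat.
Proof.
  replace (a+n+k)%nat with (a+(n+k))%nat by lia.
  rewrite cr_eq. replace (a+(n+k))%nat with ((a+n)+k)%nat by lia.
  rewrite !cr_eq, seq_app, filter_app, length_app. reflexivity.
Qed.

Lemma cr_le a n P : (count_range a (a+n) P <= n)%nat.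
Proof. rewrite cr_eq. rewrite <- (length_seq n a) at 2. apply filter_length_le. Qed.

Lemma cr_mono a n (P Q : nat -> Prop) : (forall m, (a <= m < a+n)%nat -> P m -> Q m) ->
  (count_range a (a+n) P <= count_range a (a+n) Q)%nat.
Proof.
  rewrite !cr_eq. revert a. induction n as [|n IH]; intros a H; simpl; [lia|].
  assert (H' : forall m, (S a <= m < S a + n)%nat -> P m -> Q m) by (intros m Hm Pm; apply H; [lia|exact Pm]).
  specialize (IH (S a) H').
  destruct (excluded_middle_informative (P a)) as [p|p];
  destruct (excluded_middle_informative (Q a)) as [q|q]; simpl; try lia.
  exfalso. apply q, H; [lia|exact p].
Qed.

Lemma cr_all a n (P : nat -> Prop) : (forall m, (a <= m < a+n)%nat -> P m) ->
  count_range a (a+n) P = n.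
Proof.
  intros H. apply Nat.le_antisymm; [apply cr_le|].
  transitivity (count_range a (a+n) (fun _ => True)).
  - rewrite cr_eq. clear H. revert a; induction n; intros a; simpl; [lia|].
    destruct (excluded_middle_informative True) as [_|f]; [simpl; specialize (IHn (S a)); lia| tauto].
  - apply cr_mono. intros; apply H; auto.
Qed.

Lemma cr_full a n (P : nat -> Prop) : count_range a (a+n) P = n ->
  forall m, (a <= m < a+n)%nat -> P m.
Proof.
  intros H m Hm.
  assert (E : (a+n = a + ((m-a) + 1) + (n - (m-a) - 1))%nat) by lia.
  rewrite E, cr_split in H.
  assert (E2 : (a + ((m-a)+1) = m + 1)%nat) by lia. rewrite E2 in H.
  replace (m+1)%nat with (a + (m-a) + 1)%nat in H by lia.
  rewrite cr_split in H.
  replace (a + (m-a))%nat with m in H by lia.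
  pose proof (cr_le a (m-a) P). pose proof (cr_le (m+1) (n-(m-a)-1) P).
  replace (a + (m-a))%nat with m in * by lia.
  assert (HH : count_range m (m+1) P = 1%nat) by (pose proof (cr_le m 1 P); lia).
  rewrite cr_eq in HH. simpl in HH.
  destruct (excluded_middle_informative (P m)); [auto | simpl in HH; lia].
Qed.

Section UC.
Context {X : Type} (d : X -> X -> R) (T : X -> X).

Lemma unif_cont : is_metric d -> metric_compact d -> metric_continuous d T ->
  forall e, 0 < e -> exists eta, 0 < eta /\ forall y z, d y z < eta -> d (T y) (T z) < e.
Proof.
  intros Hm Hc Hct e He.
  set (I := {p : X * R | 0 < snd p /\ forall y, d (fst p) y < snd p -> d (T (fst p)) (T y) < e/2}).
  set (U := fun (i : I) (y : X) => d (fst (proj1_sig i)) y < snd (proj1_sig i) / 2).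
  destruct (Hc I U) as [l Hl].
  - intros [[c r] [Hr Hp]] y Hy. unfold U in *; simpl in *.
    exists (r/2 - d c y). split; [lra|]. intros z Hz.
    pose proof (metric_triangle d Hm c y z). lra.
  - intros x. destruct (Hct x (e/2)) as [del [Hd Hp]]; [lra|].
    exists (exist _ (x, del) (conj Hd Hp)). unfold U; simpl.
    rewrite (proj2 (metric_eq0 d Hm x x) eq_refl). lra.
  - set (f := fun (i : I) acc => Rmin (snd (proj1_sig i) / 2) acc).
    assert (Hpos : forall l, 0 < fold_right f 1 l).
    { induction l0 as [|a l0 IHl]; simpl; [lra|]. unfold f at 1. destruct a as [[c r] [Hr Hp0]]; simpl.
      apply Rmin_glb_lt; [|exact IHl]. simpl in Hr |- *. lra. }
    assert (Hle : forall l i, In i l -> fold_right f 1 l <= snd (proj1_sig i) / 2).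
    { induction l0 as [|a l0 IHl]; simpl; intros i Hi; [contradiction|]. unfold f at 1.
      destruct Hi as [<-|Hi]; [apply Rmin_l|]. eapply Rle_trans; [apply Rmin_r|]. auto. }
    exists (fold_right f 1 l). split; [apply Hpos|].
    intros y z Hyz. destruct (Hl y) as [i [Hi Hu]].
    specialize (Hle l i Hi). destruct i as [[c r] [Hr Hp]]. unfold U in Hu; simpl in *.
    assert (d c z < r) by (pose proof (metric_triangle d Hm c y z); lra).
    assert (d c y < r) by lra.
    pose proof (Hp y H0). pose proof (Hp z H).
    pose proof (metric_triangle d Hm (T y) (T c) (T z)).
    rewrite (metric_sym d Hm (T y) (T c)) in H3. lra.
Qed.

Lemma tracing : is_metric d -> (forall e, 0 < e -> exists eta, 0 < eta /\ forall y z, d y z < eta -> d (T y) (T z) < e) ->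
  forall L e, 0 < e -> exists del, 0 < del /\ forall (x : nat -> X) s k, (k <= L)%nat ->
    (forall i, (i < k)%nat -> d (T (x (s+i)%nat)) (x (s+i+1)%nat) < del) ->
    d (iterT T k (x s)) (x (s+k)%nat) < e.
Proof.
  intros Hm Huc L. induction L as [|L IH]; intros e He.
  - exists 1. split; [lra|]. intros x s k Hk _. replace k with 0%nat by lia.
    simpl. rewrite Nat.add_0_r, (proj2 (metric_eq0 d Hm _ _) eq_refl). lra.
  - destruct (Huc (e/2)) as [eta [Heta Hu]]; [lra|].
    destruct (IH (Rmin eta e)) as [del [Hdel Hp]]; [apply Rmin_glb_lt; lra|].
    exists (Rmin del (e/2)). split; [apply Rmin_glb_lt; lra|].
    intros x s k Hk Hj.
    assert (Hj' : forall i, (i < k)%nat -> d (T (x (s+i)%nat)) (x (s+i+1)%nat) < del).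
    { intros i Hi. eapply Rlt_le_trans; [apply Hj; auto|apply Rmin_l]. }
    destruct (Nat.eq_dec k (S L)) as [->|Hne].
    + assert (A : d (iterT T L (x s)) (x (s+L)%nat) < Rmin eta e).
      { apply Hp; [lia|]. intros; apply Hj'; lia. }
      assert (B : d (T (x (s+L)%nat)) (x (s+L+1)%nat) < e/2).
      { eapply Rlt_le_trans; [apply Hj; lia|apply Rmin_r]. }
      assert (C : d (T (iterT T L (x s))) (T (x (s+L)%nat)) < e/2).
      { apply Hu. eapply Rlt_le_trans; [exact A|apply Rmin_l]. }
      replace (s + S L)%nat with (s+L+1)%nat by lia.
      change (iterT T (S L) (x s)) with (T (iterT T L (x s))).
      pose proof (metric_triangle d Hm (T (iterT T L (x s))) (T (x (s+L)%nat)) (x (s+L+1)%nat)). lra.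
    + eapply Rlt_le_trans; [apply Hp; [lia|exact Hj']|apply Rmin_r].
Qed.
End UC.

Lemma iter_inv {X} (T Tinv : X -> X) : (forall x, T (Tinv x) = x) ->
  forall s z, iterT T s (Nat.iter s Tinv z) = z.
Proof.
  intros H s. induction s as [|s IH]; intros z; [reflexivity|].
  unfold iterT in *. rewrite Nat.iter_succ_r. simpl (Nat.iter (S s) Tinv z). rewrite H. apply IH.
Qed.

Theorem lemma4p7 (X : Type) (d : X -> X -> R) (T : X -> X) (P : nat -> Prop) :
  dynamical_system d T ->
  (forall n, P n -> (1 <= n)%nat) ->
  bounded_gaps P ->
  partial_specification d T P ->
  partial_shadowing d T.
Proof.
  intros [Hm [Hc [Hct [Tinv [HTi1 [HTi2 _]]]]]] HP1 [K HK] Hspec.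
  intros eps Heps.
  set (e := Rmin eps 1).
  assert (He0 : 0 < e) by (apply Rmin_glb_lt; lra).
  assert (He1 : e <= 1) by apply Rmin_r.
  assert (Hee : e <= eps) by apply Rmin_l.
  pose proof (unif_cont d T Hm Hc Hct) as Huc.
  destruct (Hspec (e/4)) as [N0 [M Hs]]; [lra|].
  destruct (archimed_cor1 (e/4)) as [k [Hk Hk0]]; [lra|].
  set (L := ((M+1)*k)%nat).
  assert (HML : (M < L)%nat) by (unfold L; nia).
  assert (HkR : 1 < e/4 * INR k).
  { assert (0 < INR k) by (apply lt_0_INR; lia).
    apply (Rmult_lt_compat_r (INR k)) in Hk; [|lra]. rewrite Rinv_l in Hk; lra. }
  assert (HLR : INR L = (INR M + 1) * INR k) by (unfold L; rewrite mult_INR, plus_INR; simpl; lra).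
  assert (HMR : INR M <= e/4 * INR L).
  { rewrite HLR. pose proof (pos_INR M). nra. }
  assert (HL0 : 0 < INR L) by (apply lt_0_INR; lia).
  destruct (archimed_cor1 (e / (4 * (INR L + 1)))) as [N1 [HN1 HN10]].
  { apply Rdiv_lt_0_compat; lra. }
  assert (HN1R : 4 * (INR L + 1) <= e * INR N1).
  { assert (0 < INR N1) by (apply lt_0_INR; lia).
    apply (Rmult_lt_compat_r (INR N1 * (4 * (INR L + 1)))) in HN1; [|nra].
    field_simplify in HN1; lra. }
  destruct (tracing d T Hm Huc L (e/2)) as [delA [HdA HtA]]; [lra|].
  destruct (tracing d T Hm Huc N1 e) as [delB [HdB HtB]]; [lra|].
  set (delta := Rmin (Rmin delA delB) (Rmin (e / (4 * INR L)) (1 / (INR N1 + 1)))).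
  assert (Hd1 : delta <= delA) by (unfold delta; eapply Rle_trans; [apply Rmin_l|apply Rmin_l]).
  assert (Hd2 : delta <= delB) by (unfold delta; eapply Rle_trans; [apply Rmin_l|apply Rmin_r]).
  assert (Hd3 : delta <= e / (4 * INR L)) by (unfold delta; eapply Rle_trans; [apply Rmin_r|apply Rmin_l]).
  assert (Hd4 : delta <= 1 / (INR N1 + 1)) by (unfold delta; eapply Rle_trans; [apply Rmin_r|apply Rmin_r]).
  assert (Hd0 : 0 < delta).
  { unfold delta. apply Rmin_glb_lt; apply Rmin_glb_lt; try lra.
    - apply Rdiv_lt_0_compat; lra.
    - pose proof (pos_INR N1). apply Rdiv_lt_0_compat; lra. }
  exists delta. split; [exact Hd0|].
  intros N x HN Hpo.
  set (G := fun n => d (T (x n)) (x (n + 1)%nat) < delta).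
  enough (Hsuff : exists y, INR (count_range 1 (N + 1) (fun n => d (x n) (iterT T n y) < e)) > (1 - e) * INR N).
  { destruct Hsuff as [y Hy]. exists y. unfold partially_traced.
    pose proof (cr_mono 1 N (fun n => d (x n) (iterT T n y) < e) (fun n => d (x n) (iterT T n y) < eps)) as Hmo.
    replace (1 + N)%nat with (N+1)%nat in Hmo by lia.
    assert (Hmo' := Hmo (fun m _ H => Rlt_le_trans _ _ _ H Hee)).
    apply le_INR in Hmo'. pose proof (pos_INR N). nra. }
  destruct (le_lt_dec N N1) as [Hsmall|Hlarge].
  - (* small case: exact pseudo-orbit *)
    assert (Hall : forall m, (1 <= m < 1 + (N-1))%nat -> G m).
    { destruct Hpo as [HN1'|[HN2 Hc0]]; [intros; lia|].
      fold G in Hc0. replace N with (1 + (N-1))%nat in Hc0 at 1 by lia.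
      apply cr_full.
      pose proof (cr_le 1 (N-1) G).
      assert (HNr : INR (N-1) < INR N1 + 1) by (apply (Rlt_le_trans _ (INR N)); [apply lt_INR; lia| rewrite <- S_INR; apply le_INR; lia]).
      assert (HdN : delta * INR (N-1) < 1).
      { pose proof (pos_INR (N-1)). pose proof (pos_INR N1).
        assert (delta * (INR N1 + 1) <= 1).
        { apply (Rmult_le_compat_r (INR N1 + 1)) in Hd4; [|lra].
          field_simplify in Hd4; lra. }
        nra. }
      assert (HH : INR (N-1) < INR (count_range 1 (1 + (N-1)) G + 1)).
 { rewrite plus_INR. change (INR 1) with 1. nra. }
      apply INR_lt in HH. lia. }
    exists (Tinv (x 1%nat)).
    replace (N+1)%nat with (1+N)%nat by lia. rewrite (cr_all 1 N).
    + pose proof (lt_0_INR N ltac:(lia)). nra.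
    + intros m Hm1.
      replace m with (S (m-1)) at 2 by lia. unfold iterT. rewrite Nat.iter_succ_r, HTi2.
      rewrite metric_sym by exact Hm.
      replace m with (1 + (m-1))%nat at 2 by lia.
      apply HtB; [lia|]. intros i Hi.
      eapply Rlt_le_trans; [apply (Hall (1+i)%nat); lia|exact Hd2].
  -
    assert (HNR : INR N1 < INR N) by (apply lt_INR; lia).
    assert (HN2 : (2 <= N)%nat).
    { assert (INR (L + 1) < INR N) by (rewrite plus_INR; simpl; nra). apply INR_lt in H. lia. }
    destruct Hpo as [HN1'|[_ Hc0]]; [lia|]. fold G in Hc0.
    set (B := ((N-1) / L)%nat).
    assert (HB1 : (B * L <= N - 1)%nat) by (unfold B; rewrite Nat.mul_comm; apply Nat.Div0.mul_div_le).
    assert (HB2 : (N - 1 < B * L + L)%nat).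
    { unfold B. pose proof (Nat.div_mod_eq (N-1) L). pose proof (Nat.mod_upper_bound (N-1) L ltac:(lia)). nia. }
    assert (HBp : (1 <= B)%nat).
    { assert (INR (L + 1) < INR N) by (rewrite plus_INR; simpl; nra). apply INR_lt in H. nia. }
    set (a := fun i : nat => (1 + i * L)%nat).
    set (b := fun i : nat => (a i + (L - M))%nat).
    set (xs := fun i : nat => Nat.iter (a i) Tinv (x (a i))).
    destruct (HK (N0 + 2 * N)%nat) as [p [HPp Hp]].
    destruct (Hs B xs a b HBp) with (n := p) as [y [_ Hy]].
    { intros i _. unfold b. lia. }
    { intros i _. unfold b, a. nia. }
    { exact HPp. }
    { lia. }
    { assert (Hb : (b (B-1) <= N)%nat) by (unfold b, a; nia).
      apply le_INR in Hb. assert (INR (N0 + 2*N) <= INR p) by (apply le_INR; lia).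
      rewrite plus_INR, mult_INR in H. pose proof (pos_INR N0). pose proof (pos_INR (b (B-1)%nat)).
      simpl in H. nra. }
    exists y.
    set (C := fun n => d (x n) (iterT T n y) < e).
    set (c := (1 - e/4) * (INR L - INR M)).
    assert (Hc0' : 0 < c).
    { unfold c. assert (INR M < INR L) by (apply lt_INR; lia). nra. }
    assert (Hblock : forall j, (j < B)%nat ->
      INR (count_range (a j) (a j + L) C) + c * (INR L - INR (count_range (a j) (a j + L) G)) >= c).
    { intros j Hj.
      destruct (Nat.eq_dec (count_range (a j) (a j + L) G) L) as [Heq|Hne].
      - pose proof (cr_full _ _ _ Heq) as Hg.
        assert (Hsub : (count_range (a j) (b j) (fun m => Rlt (d (iterT T m (xs j)) (iterT T m y)) (e/4))
                        <= count_range (a j) (a j + L) C)%nat).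
        { transitivity (count_range (a j) (a j + (L-M)) C).
          - unfold b. apply cr_mono. intros m Hm1 Hsp. unfold C.
            set (kk := (m - a j)%nat).
            assert (E1 : iterT T m (xs j) = iterT T kk (x (a j))).
            { unfold xs, iterT. replace m with (kk + a j)%nat by lia. rewrite Nat.iter_add.
              pose proof (iter_inv T Tinv HTi2 (a j) (x (a j))) as HI. unfold iterT in HI. rewrite HI. reflexivity. }
            rewrite E1 in Hsp.
            assert (Htr : d (iterT T kk (x (a j))) (x (a j + kk)%nat) < e/2).
            { apply HtA; [lia|]. intros i Hi. eapply Rlt_le_trans; [apply (Hg (a j + i)%nat); lia | exact Hd1]. }
            replace (a j + kk)%nat with m in Htr by lia.
            rewrite (metric_sym d Hm) in Htr.
            pose proof (metric_triangle d Hm (x m) (iterT T kk (x (a j))) (iterT T m y)). lra.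
          - replace (a j + L)%nat with (a j + (L-M) + M)%nat by lia. rewrite (cr_split (a j) (L-M) M C). lia. }
        apply le_INR in Hsub. specialize (Hy j Hj).
        replace (b j - a j)%nat with (L - M)%nat in Hy by (unfold b; lia).
        rewrite minus_INR in Hy by lia. rewrite Heq. fold c in Hy. lra.
      - pose proof (cr_le (a j) L G).
        assert (Hlt : (S (count_range (a j) (a j + L) G) <= L)%nat) by lia.
        apply le_INR in Hlt. rewrite S_INR in Hlt.
        pose proof (pos_INR (count_range (a j) (a j + L) C)). nra. }
    assert (Hsum : forall B', (B' <= B)%nat ->
      INR (count_range 1 (1 + B'*L) C) + c * (INR (B'*L) - INR (count_range 1 (1+B'*L) G)) >= c * INR B').
    { induction B' as [|B' IH]; intros HB'.
      - replace (1 + 0*L)%nat with (1+0)%nat by lia. rewrite !cr_eq. simpl. lra.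
      - specialize (IH ltac:(lia)). pose proof (Hblock B' ltac:(lia)) as HBk.
        unfold a in HBk. cbv beta in HBk.
        replace (S B' * L)%nat with (B'*L + L)%nat by lia.
        replace (1 + (B'*L + L))%nat with (1 + B'*L + L)%nat by lia.
        rewrite (cr_split 1 (B'*L) L C), (cr_split 1 (B'*L) L G). rewrite !plus_INR, S_INR. lra. }
    pose proof (Hsum B (le_n B)) as HS.
    assert (HA : (count_range 1 (1 + B*L) C <= count_range 1 (N+1) C)%nat).
    { replace (N+1)%nat with (1 + B*L + (N - B*L))%nat by lia. rewrite (cr_split 1 (B*L) (N - B*L) C). lia. }
    assert (EN : N = (1 + B*L + (N-1-B*L))%nat) by lia.
    assert (Hsplit : count_range 1 N G = (count_range 1 (1+B*L) G + count_range (1+B*L) (1+B*L+(N-1-B*L)) G)%nat).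
    { rewrite EN at 1. apply cr_split. }
    pose proof (cr_le (1+B*L) (N-1-B*L) G) as Hle2.
    assert (H3 : (count_range 1 N G <= count_range 1 (1+B*L) G + (N-1-B*L))%nat) by lia.
    apply le_INR in HA. apply le_INR in H3.
    rewrite plus_INR in H3. rewrite !minus_INR in H3 by lia. rewrite minus_INR in Hc0 by lia.
    rewrite mult_INR in H3, HS.
    apply lt_INR in HB2. rewrite plus_INR, mult_INR in HB2. rewrite minus_INR in HB2 by lia.
    fold C.
    set (A0 := INR (count_range 1 (N+1) C)) in *.
    set (A1 := INR (count_range 1 (1 + B*L) C)) in *.
    set (g := INR (count_range 1 (1 + B*L) G)) in *.
    set (G0 := INR (count_range 1 N G)) in *.
    change (INR 1) with 1 in *.
    assert (HN2R : 2 <= INR N) by (apply (le_INR 2 N) in HN2; simpl in HN2; lra).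
    assert (S1 : INR B * INR L - g < delta * (INR N - 1)) by lra.
    assert (S2 : c * (INR B * INR L - g) < c * (delta * (INR N - 1))) by (apply Rmult_lt_compat_l; lra).
    assert (S3 : c <= INR L) by (unfold c; pose proof (pos_INR M); nra).
    assert (S4a : delta * INR L <= e/4).
    { apply (Rmult_le_compat_r (INR L)) in Hd3; [|lra]. field_simplify in Hd3; lra. }
    assert (S4 : c * (delta * (INR N - 1)) <= e/4 * (INR N - 1)).
    { assert (0 <= delta * (INR N - 1)) by (apply Rmult_le_pos; lra).
      assert (c * (delta * (INR N - 1)) <= INR L * (delta * (INR N - 1))) by (apply Rmult_le_compat_r; lra).
      nra. }
    assert (S5 : c * INR B >= (1 - e/2) * (INR B * INR L)).
    { unfold c. pose proof (pos_INR B).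
      assert (INR L - INR M >= (1 - e/4) * INR L) by lra.
      assert ((1 - e/4) * (INR L - INR M) >= (1-e/4) * ((1 - e/4) * INR L)) by (apply Rmult_ge_compat_l; lra).
      assert ((1-e/4) * ((1 - e/4) * INR L) >= (1 - e/2) * INR L) by nra.
      nra. }
    assert (S7 : e * INR N >= 4 * (INR L + 1)) by nra.
    assert (S8 : (1 - e/2) * (INR B * INR L) >= (1 - e/2) * (INR N - 1 - INR L)) by nra.
    nra.
Qed.
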